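(* There is an absolute constant $C$ such that for every simple temporal clique on $n$ vertices and every forward fireworks cover $S^-_T$ of it (for any outcome of the arbitrary choices in the construction), $|S^-_T|\le \frac{3}{4}\binom{n}{2}+Cn$.
   Context: A simple temporal clique is a pair $\mathcal{G}=(G,\lambda)$ where $G=(V,E)$ is the complete graph on a finite set $V$ of $n$ vertices and $\lambda:E\to\mathbb{N}$ assigns to each edge a single integer label such that any two distinct edges sharing an endpoint have different labels; the label of an arc $(x,y)$ is $\lambda(\{x,y\})$. For a vertex $v$, $e^-(v)$ is the edge incident to $v$ with smallest label. Forward construction: let $E^-$ be the set of arcs $(u,v)$ with $\{u,v\}=e^-(v)$, except that if $e^-(u)=e^-(v)=\{u,v\}$ only one of the two arcs $(u,v),(v,u)$ is included (arbitrarily). Initialize $E^-_T:=E^-$. For every vertex $v$ of out-degree at least $2$ in $(V,E^-)$, let $(v,u_1),\dots,(v,u_\ell)$ be its out-arcs in $E^-$, where $(v,u_\ell)$ has the largest label; for each $i<\ell$, if $u_i$ has out-degree $0$ in $(V,E^-)$, replace $(v,u_i)$ by $(u_i,v)$ in $E^-_T$, and otherwise remove $(v,u_i)$ from $E^-_T$. An emitter is a vertex of out-degree $0$ in $(V,E^-_T)$. The forward fireworks cover is $S^-_T=\{\{u,v\}\in E:(u,v)\in E^-_T\}\cup\{\{u,v\}\in E: u \text{ is an emitter}\}$. *)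

(* Defs.v *)
From mathcomp Require Import all_boot all_order all_algebra.
Set Implicit Arguments. Unset Strict Implicit. Unset Printing Implicit Defensive.

Section TemporalClique.
Variable V : finType.
(* lam x y = label of the edge {x,y} (values on loops x = y are irrelevant). *)
Variable lam : V -> V -> nat.

Definition simple_temporal_clique : Prop :=
  (forall x y, lam x y = lam y x) /\
  (forall x y z, x != y -> x != z -> y != z -> lam x y != lam x z).

(* emin v u : the edge {v,u} is e^-(v), the edge at v with smallest label *)
Definition emin (v u : V) : bool :=
  (u != v) && [forall w, (w != v) && (w != u) ==> (lam v u < lam v w)].

(* Em is a valid choice of the arc set E^-: arc (u,v) is in E^- iff
   {u,v} = e^-(v), except that when e^-(u) = e^-(v) = {u,v} exactly one of
   (u,v), (v,u) is included (arbitrary choice). *)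
Definition valid_Eminus (Em : rel V) : Prop :=
  (forall u v, Em u v -> emin v u) /\
  (forall u v, emin v u -> ~~ emin u v -> Em u v) /\
  (forall u v, emin v u -> emin u v -> (Em u v (+) Em v u)).

Variable Em : rel V.

Definition outdeg (u : V) : nat := #|[set w | Em u w]|.

Definition max_out (u v : V) : bool :=
  [forall w, Em u w ==> (lam u w <= lam u v)].

Definition ET (u v : V) : bool :=
  (Em u v && ((outdeg u < 2) || max_out u v)) ||
  [&& Em v u, 2 <= outdeg v, ~~ max_out v u & outdeg u == 0].

Definition emitter (u : V) : bool := [forall w, ~~ ET u w].

Definition forward_cover : {set {set V}} :=
  [set e : {set V} | [exists u, exists v,
     [&& u != v, e == [set u; v] & ET u v || emitter u]]].

End TemporalClique.

(* Main.v *)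
Require Import Defs.
From mathcomp Require Import all_boot all_order all_algebra.
From mathcomp Require Import zify.
Import GRing.Theory Num.Theory.
Set Implicit Arguments. Unset Strict Implicit.

Lemma emin_uniq (V : finType) (lam : V -> V -> nat) b a a' :
  emin lam b a -> emin lam b a' -> a = a'.
Proof.
move=> /andP[ab /forallP Ha] /andP[a'b /forallP Ha'].
apply/eqP; apply/negPn/negP => ne.
have := Ha a'; rewrite a'b eq_sym ne /= => h1.
have := Ha' a; rewrite ab ne /= => h2.
by move: (ltn_trans h1 h2); rewrite ltnn.
Qed.

Lemma max_exists (V : finType) (lam : V -> V -> nat) (Em : rel V) x :
  0 < outdeg Em x -> exists w, Em x w && max_out lam Em x w.
Proof.
rewrite /outdeg card_gt0 => /set0Pn [w0]; rewrite inE => H0.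
case: (@arg_maxnP _ w0 (Em x) (lam x) H0) => w Hw Hmax.
exists w; rewrite Hw /=; apply/forallP => j; apply/implyP; exact: Hmax.
Qed.

Lemma nonemit_of_out (V : finType) (lam : V -> V -> nat) (Em : rel V) x :
  0 < outdeg Em x -> ~~ emitter lam Em x.
Proof.
move=> /(max_exists lam) [w /andP[e m]].
rewrite /emitter negb_forall; apply/existsP; exists w; rewrite negbK /ET e m.
by rewrite orbT.
Qed.

Lemma emit_out0 (V : finType) (lam : V -> V -> nat) (Em : rel V) x :
  emitter lam Em x -> outdeg Em x = 0.
Proof.
move=> H; apply/eqP; rewrite -leqn0 leqNgt; apply/negP => /(nonemit_of_out lam).
by rewrite H.
Qed.

Lemma emit_in (V : finType) (lam : V -> V -> nat) (Em : rel V) u w :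
  emitter lam Em u -> Em w u -> ET lam Em w u.
Proof.
move=> He Ewu; have := forallP He w; rewrite /ET Ewu /= => /norP[_].
rewrite (emit_out0 He) eqxx andbT negb_and -leqNgt negbK => h.
by rewrite h.
Qed.

Lemma emit_has_in (V : finType) (lam : V -> V -> nat) (Em : rel V) u :
  simple_temporal_clique lam -> valid_Eminus lam Em -> 1 < #|V| ->
  emitter lam Em u -> exists w, Em w u.
Proof.
move=> [_ Hd] [H1 [H2 H3]] Hn He.
have [w1 Hw1] : exists w, w != u.
  apply/existsP; move: Hn; apply: contraLR; rewrite negb_exists => /forallP H.
  rewrite -leqNgt -(card1 u); apply: subset_leq_card; apply/subsetP => a _.
  by rewrite inE; move: (H a); rewrite negbK.
case: (@arg_minnP _ w1 (fun w => w != u) (lam u) Hw1) => w0 Hw0 Hmin.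
have em : emin lam u w0.
  rewrite /emin Hw0 /=; apply/forallP => w; apply/implyP => /andP[wu ww0].
  rewrite ltn_neqAle Hmin // andbT; apply: Hd => //; first by rewrite eq_sym.
  by rewrite eq_sym.
  by rewrite eq_sym.
exists w0.
case E: (emin lam w0 u).
  have := H3 _ _ em E.
  case Euw: (Em u w0) => /=; last by rewrite addbF.
  move=> _.
  have : 0 < outdeg Em u by rewrite /outdeg card_gt0; apply/set0Pn; exists w0; rewrite inE.
  by rewrite (emit_out0 He).
by apply: H2 => //; rewrite E.
Qed.

Lemma emit_in' (V : finType) (lam : V -> V -> nat) (Em : rel V) u w :
  emitter lam Em u -> Em w u -> (outdeg Em w < 2) || max_out lam Em w u.
Proof.
move=> He Ewu; have := forallP He w; rewrite /ET Ewu /= => /norP[_].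
by rewrite (emit_out0 He) eqxx andbT negb_and -leqNgt negbK.
Qed.

Lemma emit_le (V : finType) (lam : V -> V -> nat) (Em : rel V) :
  simple_temporal_clique lam -> valid_Eminus lam Em -> 1 < #|V| ->
  #|[set u | emitter lam Em u]| <= #|[set u | ~~ emitter lam Em u]|.
Proof.
move=> Hs Hv Hn.
pose g u := odflt u [pick w | Em w u].
have gP : forall u, emitter lam Em u -> Em (g u) u.
  move=> u He; rewrite /g; case: pickP => [w //|] /= H.
  by have [w Hw] := emit_has_in Hs Hv Hn He; move: (H w); rewrite Hw.
have -> : #|[set u | emitter lam Em u]| = #|g @: [set u | emitter lam Em u]|.
  apply/esym/card_in_imset => u1 u2; rewrite !inE => e1 e2 eg.
  have E1 := gP _ e1; have E2 := gP _ e2; rewrite eg in E1.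
  move: (emit_in' e1 E1) (emit_in' e2 E2); set w := g u2 => h1 h2.
  apply/eqP; apply/negPn/negP => ne.
  case: (ltnP (outdeg Em w) 2) => Hw.
    have : #|[set u1; u2]| <= outdeg Em w.
      apply: subset_leq_card; apply/subsetP => x; rewrite !inE.
      by case/orP => /eqP ->.
    by rewrite cards2 ne; move/(leq_trans Hw); rewrite ltnn.
  rewrite ltnNge Hw /= in h1 h2.
  have l1 := implyP (forallP h1 u2) E2; have l2 := implyP (forallP h2 u1) E1.
  have eql : lam w u1 = lam w u2 by apply/eqP; rewrite eqn_leq l1 l2.
  case: Hv => [H1 _]; case: Hs => [_ Hd].
  have := H1 _ _ E1; have := H1 _ _ E2; rewrite /emin => /andP[n2 _] /andP[n1 _].
  by move: (Hd w u1 u2 n1 n2 ne); rewrite eql eqxx.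
apply: subset_leq_card; apply/subsetP => x /imsetP [u]; rewrite inE => He ->.
rewrite inE; apply: nonemit_of_out; rewrite /outdeg card_gt0; apply/set0Pn.
by exists u; rewrite inE gP.
Qed.

Lemma cover_le (V : finType) (lam : V -> V -> nat) (Em : rel V) :
  valid_Eminus lam Em ->
  #|forward_cover lam Em| <= #|V| + ('C(#|V|, 2) - 'C(#|[set u | ~~ emitter lam Em u]|, 2)).
Proof.
move=> [H1 _].
set N := [set u | ~~ emitter lam Em u].
pose P := [set p : V * V | Em p.1 p.2].
pose A := (fun p : V * V => [set p.1; p.2]) @: P.
pose D2 (B : {set V}) := [set X : {set V} | X \subset B & #|X| == 2].
have sub : forward_cover lam Em \subset A :|: (D2 setT :\: D2 N).
  apply/subsetP => e; rewrite inE => /existsP [u /existsP [v /and3P [uv /eqP -> h]]].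
  rewrite !inE; case/orP: h => [Et | Emu].
    apply/orP; left; case/orP: Et => [/andP [Euv _] | /and3P [Evu _ _]].
      by apply/imsetP; exists (u, v); rewrite // inE.
    by apply/imsetP; exists (v, u); rewrite ?inE // setUC.
  apply/orP; right; rewrite subsetT cards2 uv /= andbT.
  rewrite eqxx andbT; apply/negP => /subsetP /(_ u); rewrite !inE eqxx Emu => /(_ isT).
  done.
apply: (leq_trans (subset_leq_card sub)); rewrite cardsU.
apply: (leq_trans (leq_subr _ _)); apply: leq_add.
  apply: (leq_trans (leq_imset_card _ _)).
  apply: (@leq_card_in _ _ snd) => [[a b] [a' b']]; rewrite !inE /= => E1 E2 /= eb.
  by rewrite eb in E1; rewrite (emin_uniq (H1 _ _ E1) (H1 _ _ E2)) eb.
rewrite cardsD; have -> : D2 setT :&: D2 N = D2 N.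
  apply/setIidPr; apply/subsetP => X; rewrite !inE subsetT => /andP [_ ->].
  by [].
by rewrite /D2 !cards_draws cardsT.
Qed.

From mathcomp Require Import lra.
Local Open Scope ring_scope.

Theorem theorem3 :
  exists C : rat,
    forall (V : finType) (lam : V -> V -> nat),
      simple_temporal_clique lam ->
      forall Em : rel V, valid_Eminus lam Em ->
        (#|forward_cover lam Em|%:R : rat)
          <= 3%:R / 4%:R * ('C(#|V|, 2))%:R + C * (#|V|)%:R.
Proof.
exists 2%:R => V lam Hs Em Hv.
set s := #|forward_cover lam Em|.
set n := #|V|.
set m := #|[set u | ~~ emitter lam Em u]|.
have hs := cover_le Hv; rewrite -/s -/n -/m in hs.
have mn : (m <= n)%N by apply: max_card.
have key : (n <= 1 \/ n <= 2 * m)%N.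
  case: (leqP n 1) => h; first by left.
  right; have := emit_le Hs Hv h; rewrite -/m.
  have : (#|[set u | emitter lam Em u]| + m = n)%N.
    rewrite /n -(cardsC [set u | emitter lam Em u]); congr (_ + _); rewrite /m.
    by apply: eq_card => x; rewrite !inE.
  lia.
have hnat : (4 * s <= 3 * 'C(n, 2) + 8 * n)%N.
  move: hs; rewrite !bin2.
  case: key => key.
    have -> : (n * n.-1 = 0)%N by case: (n) key => [|[|]].
    lia.
  nia.
have H : ((4 * s)%N%:R <= (3 * 'C(n, 2) + 8 * n)%N%:R :> rat) by rewrite ler_nat.
rewrite natrD !natrM in H.
lra.
Qed.
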